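(* For a Legendrian curve $\gamma$, \begin{equation} \lim_{\Delta s,\,\Delta t\to 0} \frac{\mathbb{X}(\gamma(s),\gamma(t),\gamma(s+\Delta s),\gamma(t+\Delta t))}{(\Delta s)^2(\Delta t)^2} =\left(\frac{|\gamma'(s)|\,|\gamma'(t)|}{\|\gamma(s)^{-1}\gamma(t)\|_{\mathcal{H}}^2}\right)^2 \end{equation} holds for $s\neq t$.
   Context: $\mathcal{H}=\mathbb{C}\times\mathbb{R}$ is the 3-dimensional Heisenberg group with coordinates $(z,u)=(x,y,u)$, group law $(z,u)\cdot(z',u')=(z+z',u+u'-\tfrac{1}{2}\Im(z\overline{z'}))$, horizontal distribution spanned by $X=\partial_x-\tfrac12 y\,\partial_u$, $Y=\partial_y+\tfrac12 x\,\partial_u$ (orthonormal, norm $|\cdot|$); a curve is Legendrian if its velocity is horizontal. The Korányi norm is $\|(x,y,u)\|_{\mathcal{H}}=\sqrt[4]{(x^2+y^2)^2+16u^2}$. For $p=(z,u)$ set $A(p)=|z|^2-4iu$, so $\|p\|_{\mathcal{H}}=|A(p)|^{1/2}$. The complex cross ratio (Korányi–Reimann) is $\mathbb{X}(p_1,p_2,p_3,p_4)=\dfrac{A(p_3^{-1}p_1)A(p_4^{-1}p_2)}{A(p_4^{-1}p_1)A(p_3^{-1}p_2)}$. *)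

(* Defs.v *)
From Stdlib Require Import Reals.
From Coquelicot Require Import Coquelicot.
Open Scope R_scope.

(* Points of the Heisenberg group H = C x R, encoded as ((x, y), u). *)
Definition Hpt : Type := ((R * R) * R)%type.
Definition hx (p : Hpt) : R := fst (fst p).
Definition hy (p : Hpt) : R := snd (fst p).
Definition hu (p : Hpt) : R := snd p.

(* Group law (z,u).(z',u') = (z+z', u+u' - 1/2 Im(z conj z')),
   with Im(z conj z') = y x' - x y'. *)
Definition hmul (p q : Hpt) : Hpt :=
  ((hx p + hx q, hy p + hy q),
   hu p + hu q - / 2 * (hy p * hx q - hx p * hy q)).
Definition hinv (p : Hpt) : Hpt := ((- hx p, - hy p), - hu p).

Definition Afun (p : Hpt) : C := (hx p ^ 2 + hy p ^ 2, - (4 * hu p)).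

Definition koranyi (p : Hpt) : R :=
  sqrt (sqrt ((hx p ^ 2 + hy p ^ 2) ^ 2 + 16 * hu p ^ 2)).

Definition cross_ratio (p1 p2 p3 p4 : Hpt) : C :=
  Cdiv (Cmult (Afun (hmul (hinv p3) p1)) (Afun (hmul (hinv p4) p2)))
       (Cmult (Afun (hmul (hinv p4) p1)) (Afun (hmul (hinv p3) p2))).

Definition in_interval (a b : Rbar) (t : R) : Prop := Rbar_lt a t /\ Rbar_lt t b.

Definition C1_curve (a b : Rbar) (gamma : R -> Hpt) : Prop :=
  forall t, in_interval a b t ->
    ex_derive (fun r => hx (gamma r)) t /\ continuous (Derive (fun r => hx (gamma r))) t /\
    ex_derive (fun r => hy (gamma r)) t /\ continuous (Derive (fun r => hy (gamma r))) t /\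
    ex_derive (fun r => hu (gamma r)) t /\ continuous (Derive (fun r => hu (gamma r))) t.

(* Legendrian: the velocity is horizontal, i.e. lies in span{X, Y} with
   X = d_x - y/2 d_u, Y = d_y + x/2 d_u; equivalently u' = (x y' - y x')/2. *)
Definition legendrian (a b : Rbar) (gamma : R -> Hpt) : Prop :=
  C1_curve a b gamma /\
  forall t, in_interval a b t ->
    Derive (fun r => hu (gamma r)) t =
      / 2 * (hx (gamma t) * Derive (fun r => hy (gamma r)) t
             - hy (gamma t) * Derive (fun r => hx (gamma r)) t).

(* |gamma'(t)|: the norm of the horizontal velocity x' X + y' Y (X, Y orthonormal). *)
Definition hspeed (gamma : R -> Hpt) (t : R) : R :=
  sqrt (Derive (fun r => hx (gamma r)) t ^ 2 + Derive (fun r => hy (gamma r)) t ^ 2).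

(* Main.v *)
Require Import Defs.
From Stdlib Require Import Reals Lra Psatz.
From Coquelicot Require Import Coquelicot.
Open Scope R_scope.

Section Tk.
Context {T : Type} {F : (T -> Prop) -> Prop} {FF : Filter F}.

Lemma lim_plus (f g : T -> R) a b :
  filterlim f F (locally a) -> filterlim g F (locally b) ->
  filterlim (fun x => f x + g x) F (locally (a + b)).
Proof.
  intros Hf Hg. eapply filterlim_comp_2; [exact Hf | exact Hg |].
  exact (@filterlim_plus R_AbsRing R_NormedModule a b).
Qed.

Lemma lim_mult (f g : T -> R) a b :
  filterlim f F (locally a) -> filterlim g F (locally b) ->
  filterlim (fun x => f x * g x) F (locally (a * b)).
Proof.
  intros Hf Hg. eapply filterlim_comp_2; [exact Hf | exact Hg |].
  exact (@filterlim_mult R_AbsRing a b).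
Qed.

Lemma lim_opp (f : T -> R) a :
  filterlim f F (locally a) -> filterlim (fun x => - f x) F (locally (- a)).
Proof.
  intros Hf. eapply filterlim_comp; [exact Hf |].
  exact (@filterlim_opp R_AbsRing R_NormedModule a).
Qed.

Lemma lim_const (a : R) : filterlim (fun _ : T => a) F (locally a).
Proof. apply filterlim_const. Qed.

Lemma lim_inv (f : T -> R) a : a <> 0 ->
  filterlim f F (locally a) -> filterlim (fun x => / f x) F (locally (/ a)).
Proof.
  intros Ha Hf. eapply filterlim_comp; [exact Hf |].
  refine (filterlim_Rbar_inv (Finite a) _). intro H; apply Ha; injection H; auto.
Qed.

Lemma C_parts (f : T -> C) (z : C) :
  filterlim (fun x => fst (f x)) F (locally (fst z)) ->
  filterlim (fun x => snd (f x)) F (locally (snd z)) ->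
  filterlim f F (locally z).
Proof.
  intros H1 H2. apply filterlim_locally. intros eps.
  pose proof (proj1 (filterlim_locally _ _) H1 eps) as E1.
  pose proof (proj1 (filterlim_locally _ _) H2 eps) as E2.
  generalize (filter_and _ _ E1 E2). apply filter_imp. intros x [A B].
  split; assumption.
Qed.

Lemma C_fst (f : T -> C) (z : C) : filterlim f F (locally z) ->
  filterlim (fun x => fst (f x)) F (locally (fst z)).
Proof.
  intros H. apply filterlim_locally. intros eps.
  generalize (proj1 (filterlim_locally _ _) H eps). apply filter_imp.
  intros x [A B]; exact A.
Qed.

Lemma C_snd (f : T -> C) (z : C) : filterlim f F (locally z) ->
  filterlim (fun x => snd (f x)) F (locally (snd z)).
Proof.
  intros H. apply filterlim_locally. intros eps.
  generalize (proj1 (filterlim_locally _ _) H eps). apply filter_imp.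
  intros x [A B]; exact B.
Qed.

Lemma lim_Cmult (f g : T -> C) (a b : C) :
  filterlim f F (locally a) -> filterlim g F (locally b) ->
  filterlim (fun x => Cmult (f x) (g x)) F (locally (Cmult a b)).
Proof.
  intros Hf Hg. apply C_parts; simpl.
  - apply lim_plus. apply lim_mult; [apply C_fst|apply C_fst]; auto.
    apply lim_opp. apply lim_mult; [apply C_snd|apply C_snd]; auto.
  - apply lim_plus; apply lim_mult; first [apply C_fst | apply C_snd]; auto.
Qed.

Lemma lim_Cinv (f : T -> C) (a : C) : a <> 0%C ->
  filterlim f F (locally a) ->
  filterlim (fun x => Cinv (f x)) F (locally (Cinv a)).
Proof.
  intros Ha Hf.
  assert (Hn : fst a ^ 2 + snd a ^ 2 <> 0).
  { intro E. apply Ha. destruct a as [p q]; simpl in *.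
    assert (p = 0) by nra. assert (q = 0) by nra. subst. reflexivity. }
  assert (HD : filterlim (fun x => / (fst (f x) ^ 2 + snd (f x) ^ 2)) F
                 (locally (/ (fst a ^ 2 + snd a ^ 2)))).
  { apply lim_inv; auto. simpl. 
    apply lim_plus; apply lim_mult; try apply lim_mult; try apply lim_const; first [apply C_fst | apply C_snd]; auto. }
  apply C_parts; unfold Cinv; simpl.
  - apply lim_mult; auto. apply C_fst; auto.
  - apply lim_mult; auto. apply lim_opp. apply C_snd; auto.
Qed.
End Tk.

Lemma prod_le (u v U V : R) : 0 <= u -> 0 <= v -> u <= U -> v <= V -> u * v <= U * V.
Proof. intros; apply Rmult_le_compat; auto. Qed.

Lemma bound_lemma a b A B p q c eta :
  0 <= eta <= 1 ->
  Rabs (A - a) <= eta -> Rabs (B - b) <= eta ->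
  Rabs (p - c * a) <= eta * Rabs c -> Rabs (q - c * b) <= eta * Rabs c ->
  Rabs (B * p - A * q) <= eta * Rabs c * (2 * Rabs a + 2 * Rabs b + 2).
Proof.
  intros He HA HB Hp Hq.
  replace (B * p - A * q) with ((B - b) * p + b * (p - c * a) + (- ((A - a) * q)) + (- (a * (q - c * b)))) by ring.
  assert (Hp' : Rabs p <= Rabs c * (1 + Rabs a)).
  { replace p with ((p - c * a) + c * a) by ring.
    eapply Rle_trans; [apply Rabs_triang|]. rewrite Rabs_mult.
    pose proof (Rabs_pos c); nra. }
  assert (Hq' : Rabs q <= Rabs c * (1 + Rabs b)).
  { replace q with ((q - c * b) + c * b) by ring.
    eapply Rle_trans; [apply Rabs_triang|]. rewrite Rabs_mult.
    pose proof (Rabs_pos c); nra. }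
  eapply Rle_trans; [apply Rabs_triang|].
  eapply Rle_trans; [apply Rplus_le_compat_r; apply Rabs_triang|].
  eapply Rle_trans; [apply Rplus_le_compat_r; apply Rplus_le_compat_r; apply Rabs_triang|].
  rewrite !Rabs_Ropp, !Rabs_mult.
  pose proof (prod_le _ _ _ _ (Rabs_pos (B - b)) (Rabs_pos p) HB Hp').
  pose proof (prod_le _ _ _ _ (Rabs_pos (A - a)) (Rabs_pos q) HA Hq').
  pose proof (prod_le _ _ _ _ (Rabs_pos b) (Rabs_pos _) (Rle_refl (Rabs b)) Hp).
  pose proof (prod_le _ _ _ _ (Rabs_pos a) (Rabs_pos _) (Rle_refl (Rabs a)) Hq).
  nra.
Qed.

Lemma ballR (x e y : R) : ball x e y <-> Rabs (y - x) < e.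
Proof. reflexivity. Qed.

Lemma interval_nbhd a b s : in_interval a b s ->
  exists d : posreal, forall r, Rabs (r - s) < d -> in_interval a b r.
Proof.
  intros [H1 H2].
  pose proof (open_Rbar_gt' s a H1) as L1.
  pose proof (open_Rbar_lt' s b H2) as L2.
  destruct (filter_and _ _ L1 L2) as [d Hd].
  exists d. intros r Hr. apply Hd. exact Hr.
Qed.

Lemma W_deriv (x y u : R -> R) s c :
  ex_derive x (s + c) -> ex_derive y (s + c) -> ex_derive u (s + c) ->
  is_derive (fun h => - u (s + h) + u s - / 2 * (- y (s + h) * x s - - x (s + h) * y s)) c
    (- Derive u (s + c) - / 2 * (- Derive y (s + c) * x s + Derive x (s + c) * y s)).
Proof.
  intros Hx Hy Hu.
  auto_derive.
  - repeat split; auto.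
  - change (Derive (fun x0 => u x0)) with (Derive u); change (Derive (fun x0 => x x0)) with (Derive x); change (Derive (fun x0 => y x0)) with (Derive y). ring.
Qed.

Lemma dq_lim f s l : is_derive f s l ->
  filterlim (fun h => (f (s + h) - f s) / h) (within (fun h => h <> 0) (locally 0)) (locally l).
Proof.
  intros H. apply is_derive_Reals in H.
  apply filterlim_locally; intro eps.
  destruct (H eps (cond_pos eps)) as [d Hd].
  exists d. intros h Hh Hnz. apply ballR. apply Hd; auto.
  pose proof (proj1 (ballR _ _ _) Hh) as Hh1. rewrite Rminus_0_r in Hh1. exact Hh1.
Qed.

Lemma W_lim (x y u : R -> R) s (d0 : posreal) :
  (forall r, Rabs (r - s) < d0 -> ex_derive x r /\ ex_derive y r /\ ex_derive u r /\
      Derive u r = / 2 * (x r * Derive y r - y r * Derive x r)) ->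
  continuous (Derive x) s -> continuous (Derive y) s ->
  filterlim (fun h => - (4 * (- u (s + h) + u s - / 2 * (- y (s + h) * x s - - x (s + h) * y s))) / h ^ 2)
    (within (fun h => h <> 0) (locally 0)) (locally 0).
Proof.
  intros Hd Cx Cy.
  destruct (Hd s ltac:(rewrite Rminus_diag, Rabs_R0; apply cond_pos)) as (Dx & Dy & _).
  apply filterlim_locally; intro eps.
  set (a := Derive x s). set (b := Derive y s).
  set (K := 2 * Rabs a + 2 * Rabs b + 2).
  assert (HK : 0 < K) by (unfold K; pose proof (Rabs_pos a); pose proof (Rabs_pos b); lra).
  assert (Heta : 0 < Rmin 1 (eps / (4 * K))).
  { apply Rmin_pos; [lra|]. apply Rdiv_lt_0_compat; [apply cond_pos | lra]. }
  set (eta := mkposreal _ Heta).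
  assert (Heta1 : eta <= 1) by apply Rmin_l.
  assert (Heta2 : eta <= eps / (4 * K)) by apply Rmin_r.
  pose proof (proj1 (is_derive_Reals _ _ _) (Derive_correct _ _ Dx) eta (cond_pos eta)) as [d1 H1].
  pose proof (proj1 (is_derive_Reals _ _ _) (Derive_correct _ _ Dy) eta (cond_pos eta)) as [d2 H2].
  pose proof (proj1 (filterlim_locally _ _) Cx eta) as [d3 H3].
  pose proof (proj1 (filterlim_locally _ _) Cy eta) as [d4 H4].
  assert (Hdel : 0 < Rmin (Rmin d0 d1) (Rmin (Rmin d2 d3) d4) / 2).
  { repeat apply Rmin_case; destruct d0, d1, d2, d3, d4; simpl; lra. }
  set (del := mkposreal _ Hdel).
  assert (Hdl : forall c, Rabs c < 2 * del -> Rabs c < d0 /\ Rabs c < d1 /\ Rabs c < d2 /\ Rabs c < d3 /\ Rabs c < d4).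
  { intros c Hc. simpl in Hc.
    pose proof (Rmin_l (Rmin d0 d1) (Rmin (Rmin d2 d3) d4)).
    pose proof (Rmin_r (Rmin d0 d1) (Rmin (Rmin d2 d3) d4)).
    pose proof (Rmin_l d0 d1). pose proof (Rmin_r d0 d1).
    pose proof (Rmin_l (Rmin d2 d3) d4). pose proof (Rmin_r (Rmin d2 d3) d4).
    pose proof (Rmin_l d2 d3). pose proof (Rmin_r d2 d3). lra. }
  exists del. intros h Hh0 Hnz. pose proof (proj1 (ballR _ _ _) Hh0) as Hh. rewrite Rminus_0_r in Hh.
  apply ballR. rewrite Rminus_0_r.
  set (W := fun h => - u (s + h) + u s - / 2 * (- y (s + h) * x s - - x (s + h) * y s)).
  set (g := fun c => - Derive u (s + c) - / 2 * (- Derive y (s + c) * x s + Derive x (s + c) * y s)).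
  assert (HW : forall c, Rabs (c - 0) <= del -> is_derive W c (g c)).
  { intros c Hc. rewrite Rminus_0_r in Hc.
    assert (Hc2 : Rabs (s + c - s) < d0).
    { replace (s + c - s) with c by ring. assert (Rabs c < 2 * del) by (simpl in *; lra).
      apply Hdl; auto. }
    destruct (Hd _ Hc2) as (E1 & E2 & E3 & _).
    apply W_deriv; auto. }
  destruct (MVT_cor4 W g 0 del HW h ltac:(rewrite Rminus_0_r; lra)) as [c [Hc1 Hc2]].
  rewrite !Rminus_0_r in Hc2. rewrite Rminus_0_r in Hc1.
  assert (W0 : W 0 = 0) by (unfold W; rewrite Rplus_0_r; ring).
  rewrite W0, Rminus_0_r in Hc1.
  assert (Hc : Rabs c < 2 * del) by (simpl in *; lra).
  destruct (Hdl c Hc) as (L0 & L1 & L2 & L3 & L4).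
  assert (Hsc : Rabs (s + c - s) < d0) by (replace (s + c - s) with c by ring; auto).
  destruct (Hd _ Hsc) as (_ & _ & _ & Leg).
  assert (Hg : g c = - / 2 * (Derive y (s + c) * (x (s + c) - x s) - Derive x (s + c) * (y (s + c) - y s))).
  { unfold g. rewrite Leg. ring. }
  assert (BA : Rabs (Derive x (s + c) - a) <= eta).
  { left. apply (H3 (s + c)). apply ballR. replace (s + c - s) with c by ring. auto. }
  assert (BB : Rabs (Derive y (s + c) - b) <= eta).
  { left. apply (H4 (s + c)). apply ballR. replace (s + c - s) with c by ring. auto. }
  assert (Bp : forall (f : R -> R) l (d : posreal),
     (forall h, h <> 0 -> Rabs h < d -> Rabs ((f (s + h) - f s) / h - l) < eta) ->
     Rabs c < d -> Rabs (f (s + c) - f s - c * l) <= eta * Rabs c).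
  { intros f l d Hf Hcd. destruct (Req_dec c 0) as [E|E].
    - subst c. rewrite Rplus_0_r. replace (f s - f s - 0 * l) with 0 by ring.
      rewrite Rabs_R0. pose proof (Rabs_pos 0); pose proof (cond_pos eta); nra.
    - replace (f (s + c) - f s - c * l) with (c * ((f (s + c) - f s) / c - l)) by (field; auto).
      rewrite Rabs_mult. rewrite Rmult_comm. apply Rmult_le_compat_r; [apply Rabs_pos|].
      left. apply Hf; auto. }
  pose proof (Bp x a d1 H1 L1) as Px.
  pose proof (Bp y b d2 H2 L2) as Py.
  pose proof (bound_lemma a b _ _ _ _ c eta (conj (Rlt_le _ _ (cond_pos eta)) Heta1) BA BB Px Py) as Bd.
  fold K in Bd.
  assert (Hgc : Rabs (g c) <= / 2 * (eta * Rabs c * K)).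
  { rewrite Hg. rewrite Rabs_mult. rewrite Rabs_Ropp, Rabs_inv, Rabs_pos_eq by lra.
    apply Rmult_le_compat_l; [lra|]. exact Bd. }
  assert (HWh : Rabs (W h) <= / 2 * eta * K * h ^ 2).
  { rewrite Hc1, Rabs_mult.
    pose proof (Rabs_pos c). pose proof (Rabs_pos h). pose proof (Rabs_pos (g c)).
    assert (Hsq : h ^ 2 = Rabs h * Rabs h) by (rewrite <- Rabs_mult; simpl; rewrite Rmult_1_r, Rabs_pos_eq; nra).
    rewrite Hsq.
    assert (Rabs (g c) <= / 2 * eta * K * Rabs h).
    { eapply Rle_trans; [exact Hgc|]. replace (/ 2 * (eta * Rabs c * K)) with (/ 2 * eta * K * Rabs c) by ring. apply Rmult_le_compat_l; [pose proof (cond_pos eta); apply Rmult_le_pos; [apply Rmult_le_pos|]; lra | exact Hc2]. }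
    nra. }
  fold W.
  assert (Hh2 : 0 < h ^ 2) by (simpl; rewrite Rmult_1_r; nra).
  unfold Rdiv. rewrite Rabs_mult, Rabs_Ropp, Rabs_mult, Rabs_inv, (Rabs_pos_eq (h ^ 2)), (Rabs_pos_eq 4) by lra.
  apply (Rmult_lt_reg_r (h ^ 2)); auto.
  rewrite Rmult_assoc, Rinv_l by lra. rewrite Rmult_1_r.
  assert (eta * K <= eps / 4).
  { apply (Rmult_le_compat_r K) in Heta2; [|lra]. replace (eps / (4 * K) * K) with (eps / 4) in Heta2 by (field; lra). exact Heta2. }
  change (4 * Rabs (W h) < eps * h ^ 2).
  assert (eta * K * h ^ 2 <= eps / 4 * h ^ 2) by (apply Rmult_le_compat_r; lra).
  assert (0 < eps * h ^ 2) by (apply Rmult_lt_0_compat; [apply cond_pos | lra]).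
  assert (E : / 2 * eta * K * h ^ 2 = / 2 * (eta * K * h ^ 2)) by ring.
  rewrite E in HWh. lra.
Qed.

Lemma core a b gamma s : legendrian a b gamma -> in_interval a b s ->
  filterlim (fun h => Cdiv (Afun (hmul (hinv (gamma (s + h))) (gamma s))) (RtoC (h ^ 2)))
    (within (fun h => h <> 0) (locally 0)) (locally (RtoC (hspeed gamma s ^ 2))).
Proof.
  intros [HC HL] Hs.
  destruct (interval_nbhd _ _ _ Hs) as [d0 Hd0].
  set (x := fun r => hx (gamma r)). set (y := fun r => hy (gamma r)). set (u := fun r => hu (gamma r)).
  assert (Hd : forall r, Rabs (r - s) < d0 -> ex_derive x r /\ ex_derive y r /\ ex_derive u r /\
      Derive u r = / 2 * (x r * Derive y r - y r * Derive x r)).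
  { intros r Hr. pose proof (Hd0 r Hr) as Hi.
    destruct (HC r Hi) as (E1 & _ & E2 & _ & E3 & _).
    repeat split; auto; try (apply HL; auto). }
  destruct (HC s Hs) as (Dx & Cx & Dy & Cy & _).
  apply (filterlim_within_ext (fun h : R => h <> 0)
    (fun h => (((x (s + h) - x s) / h) * ((x (s + h) - x s) / h) + ((y (s + h) - y s) / h) * ((y (s + h) - y s) / h),
               - (4 * (- u (s + h) + u s - / 2 * (- y (s + h) * x s - - x (s + h) * y s))) / h ^ 2))).
  - intros h Hh. unfold x, y, u, Afun, hmul, hinv, hx, hy, hu, Cdiv, Cmult, Cinv, RtoC; simpl.
    apply injective_projections; simpl; field; auto.
  - apply C_parts; simpl.
    + assert (E : hspeed gamma s * (hspeed gamma s * 1) = Derive x s * Derive x s + Derive y s * Derive y s).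
      { unfold hspeed. rewrite Rmult_1_r, sqrt_sqrt; [unfold x, y; ring|].
        pose proof (pow2_ge_0 (Derive x s)); pose proof (pow2_ge_0 (Derive y s)); unfold x, y in *; lra. }
      rewrite E. apply lim_plus; apply lim_mult; apply dq_lim; apply Derive_correct; auto.
    + apply (W_lim x y u s d0); auto.
Qed.

Lemma cont_poly (x y u : R -> R) t px py pu : ex_derive x t -> ex_derive y t -> ex_derive u t ->
  continuous (fun r => (- x r + px) ^ 2 + (- y r + py) ^ 2) t /\
  continuous (fun r => - (4 * (- u r + pu - / 2 * (- y r * px - - x r * py)))) t.
Proof.
  intros Dx Dy Du. split; apply (@ex_derive_continuous R_AbsRing R_NormedModule); auto_derive; repeat split; auto.
Qed.

Lemma cont_A a b gamma t P : C1_curve a b gamma -> in_interval a b t ->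
  filterlim (fun r => Afun (hmul (hinv (gamma r)) P)) (locally t)
    (locally (Afun (hmul (hinv (gamma t)) P))).
Proof.
  intros HC Ht. destruct (HC t Ht) as (Dx & _ & Dy & _ & Du & _).
  destruct (cont_poly _ _ _ t (hx P) (hy P) (hu P) Dx Dy Du) as [C1 C2].
  apply C_parts.
  - exact C1.
  - exact C2.
Qed.

Definition Dom := fun d : R * R => fst d <> 0 /\ snd d <> 0.

Lemma fst_lim : filterlim (@fst R R) (within Dom (locally (0, 0))) (within (fun h => h <> 0) (locally 0)).
Proof.
  intros P [e He]. exists e. intros [d1 d2] [B1 B2] [N1 N2]. apply He; auto.
Qed.

Lemma snd_lim : filterlim (@snd R R) (within Dom (locally (0, 0))) (within (fun h => h <> 0) (locally 0)).
Proof.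
  intros P [e He]. exists e. intros [d1 d2] [B1 B2] [N1 N2]. apply He; auto.
Qed.

Lemma within_loc (F : (R -> Prop) -> Prop) {FF : Filter F} D :
  filterlim (fun h : R => h) (within D F) F.
Proof. intros P HP. unfold filtermap, within. apply filter_imp with (2 := HP). auto. Qed.

Lemma shift_lim (f : R * R -> R) s :
  filterlim f (within Dom (locally (0, 0))) (within (fun h => h <> 0) (locally 0)) ->
  filterlim (fun d => s + f d) (within Dom (locally (0, 0))) (locally s).
Proof.
  intros H.
  assert (H' : filterlim (fun d => s + f d) (within Dom (locally (0, 0))) (locally (s + 0))).
  { apply lim_plus; [apply lim_const|]. exact (filterlim_comp _ _ _ f (fun h : R => h) _ _ _ H (within_loc _ _)). }
  rewrite Rplus_0_r in H'. exact H'.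
Qed.

Lemma alg (p q m n : C) e1 e2 : e1 <> 0 -> e2 <> 0 ->
  Cdiv (Cdiv (Cmult p q) (Cmult m n)) (RtoC (e1 ^ 2 * e2 ^ 2)) =
  Cmult (Cmult (Cdiv p (RtoC (e1 ^ 2))) (Cdiv q (RtoC (e2 ^ 2)))) (Cinv (Cmult m n)).
Proof.
  intros H1 H2. unfold Cdiv. generalize (Cinv (Cmult m n)). intros w.
  rewrite RtoC_mult.
  assert (RtoC (e1 ^ 2) <> 0%C) by (intro E; injection E; intro E1; exact (pow_nonzero e1 2 H1 E1)).
  assert (RtoC (e2 ^ 2) <> 0%C) by (intro E; injection E; intro E1; exact (pow_nonzero e2 2 H2 E1)).
  field. auto.
Qed.

Lemma sq0 (z : R) : z ^ 2 = 0 -> z = 0.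
Proof. intros H. simpl in H. rewrite Rmult_1_r in H. apply Rsqr_0_uniq. exact H. Qed.

Lemma prodA_nz (p1 p2 : Hpt) : p1 <> p2 ->
  Cmult (Afun (hmul (hinv p2) p1)) (Afun (hmul (hinv p1) p2)) <> 0%C.
Proof.
  intros Hne E.
  set (q := hmul (hinv p1) p2) in *.
  set (Q := (hx q ^ 2 + hy q ^ 2) ^ 2 + 16 * hu q ^ 2).
  assert (HM : Cmult (Afun (hmul (hinv p2) p1)) (Afun q) = RtoC Q).
  { unfold Q, q, Afun, hmul, hinv, hx, hy, hu, Cmult, RtoC; simpl.
    apply injective_projections; simpl; ring. }
  rewrite HM in E. injection E. intro E0. apply Hne. unfold Q in E0.
    assert (E1 : hx q ^ 2 + hy q ^ 2 = 0).
    { pose proof (pow2_ge_0 (hx q ^ 2 + hy q ^ 2)); pose proof (pow2_ge_0 (hu q)).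
      apply sq0. lra. }
    assert (E2 : hu q ^ 2 = 0).
    { pose proof (pow2_ge_0 (hx q ^ 2 + hy q ^ 2)); pose proof (pow2_ge_0 (hu q)). lra. }
    assert (Ex : hx q = 0) by (pose proof (pow2_ge_0 (hx q)); pose proof (pow2_ge_0 (hy q)); apply sq0; lra).
    assert (Ey : hy q = 0) by (pose proof (pow2_ge_0 (hx q)); pose proof (pow2_ge_0 (hy q)); apply sq0; lra).
    assert (Eu : hu q = 0) by (apply sq0; auto).
    destruct p1 as [[x1 y1] u1]. destruct p2 as [[x2 y2] u2].
    unfold q, hmul, hinv, hx, hy, hu in Ex, Ey, Eu; simpl in Ex, Ey, Eu.
    assert (x2 = x1) by lra. assert (y2 = y1) by lra. subst x2 y2.
    assert (u2 = u1) by nra. subst u2. reflexivity.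
Qed.

Lemma final_value (p1 p2 : Hpt) (hs ht : R) : p1 <> p2 ->
  Cmult (Cmult (RtoC (hs ^ 2)) (RtoC (ht ^ 2)))
    (Cinv (Cmult (Afun (hmul (hinv p2) p1)) (Afun (hmul (hinv p1) p2)))) =
  RtoC (((hs * ht) / (koranyi (hmul (hinv p1) p2)) ^ 2) ^ 2).
Proof.
  intros Hne.
  set (q := hmul (hinv p1) p2).
  set (Q := (hx q ^ 2 + hy q ^ 2) ^ 2 + 16 * hu q ^ 2).
  assert (HM : Cmult (Afun (hmul (hinv p2) p1)) (Afun q) = RtoC Q).
  { unfold Q, q, Afun, hmul, hinv, hx, hy, hu, Cmult, RtoC; simpl.
    apply injective_projections; simpl; ring. }
  assert (HQ0 : 0 <= Q) by (unfold Q; pose proof (pow2_ge_0 (hx q ^ 2 + hy q ^ 2)); pose proof (pow2_ge_0 (hu q)); lra).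
  assert (HQ : Q <> 0).
  { intro E. apply Hne. unfold Q in E.
    assert (E1 : hx q ^ 2 + hy q ^ 2 = 0).
    { pose proof (pow2_ge_0 (hx q ^ 2 + hy q ^ 2)); pose proof (pow2_ge_0 (hu q)).
      apply sq0. lra. }
    assert (E2 : hu q ^ 2 = 0).
    { pose proof (pow2_ge_0 (hx q ^ 2 + hy q ^ 2)); pose proof (pow2_ge_0 (hu q)). lra. }
    assert (Ex : hx q = 0) by (pose proof (pow2_ge_0 (hx q)); pose proof (pow2_ge_0 (hy q)); apply sq0; lra).
    assert (Ey : hy q = 0) by (pose proof (pow2_ge_0 (hx q)); pose proof (pow2_ge_0 (hy q)); apply sq0; lra).
    assert (Eu : hu q = 0) by (apply sq0; auto).
    destruct p1 as [[x1 y1] u1]. destruct p2 as [[x2 y2] u2].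
    unfold q, hmul, hinv, hx, hy, hu in Ex, Ey, Eu; simpl in Ex, Ey, Eu.
    assert (x2 = x1) by lra. assert (y2 = y1) by lra. subst x2 y2.
    assert (u2 = u1) by nra. subst u2. reflexivity. }
  fold q. rewrite HM, <- RtoC_inv by auto. rewrite <- !RtoC_mult. f_equal.
  unfold koranyi. fold Q.
  rewrite pow2_sqrt by (apply sqrt_pos).
  assert (HsQ : 0 < sqrt Q) by (apply sqrt_lt_R0; lra).
  unfold Rdiv. rewrite Rpow_mult_distr, pow_inv, pow2_sqrt by lra.
  rewrite Rpow_mult_distr. reflexivity.
Qed.

Theorem proposition6p1 (a b : Rbar) (gamma : R -> Hpt) (s t : R) :
  legendrian a b gamma ->
  in_interval a b s -> in_interval a b t ->
  s <> t -> gamma s <> gamma t ->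
  filterlim
    (fun d : R * R =>
       Cdiv (cross_ratio (gamma s) (gamma t) (gamma (s + fst d)) (gamma (t + snd d)))
            (RtoC ((fst d) ^ 2 * (snd d) ^ 2)))
    (within (fun d : R * R => fst d <> 0 /\ snd d <> 0) (locally (0, 0)))
    (locally (RtoC (((hspeed gamma s * hspeed gamma t)
                      / (koranyi (hmul (hinv (gamma s)) (gamma t))) ^ 2) ^ 2))).
Proof.
  intros HL Hs Ht Hst Hne.
  pose proof (proj1 HL) as HC.
  apply (filterlim_within_ext Dom (fun d => Cmult (Cmult
      (Cdiv (Afun (hmul (hinv (gamma (s + fst d))) (gamma s))) (RtoC (fst d ^ 2)))
      (Cdiv (Afun (hmul (hinv (gamma (t + snd d))) (gamma t))) (RtoC (snd d ^ 2))))
      (Cinv (Cmult (Afun (hmul (hinv (gamma (t + snd d))) (gamma s)))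
                   (Afun (hmul (hinv (gamma (s + fst d))) (gamma t))))))).
  - intros d [H1 H2]. unfold cross_ratio. rewrite alg; auto.
  - rewrite <- (final_value (gamma s) (gamma t) (hspeed gamma s) (hspeed gamma t) Hne).
    apply lim_Cmult; [apply lim_Cmult|apply lim_Cinv].
    + apply (filterlim_comp _ _ _ (@fst R R) (fun h => Cdiv (Afun (hmul (hinv (gamma (s + h))) (gamma s))) (RtoC (h ^ 2))) _ (within (fun h => h <> 0) (locally 0))).
      * apply fst_lim.
      * apply (core a b); auto.
    + apply (filterlim_comp _ _ _ (@snd R R) (fun h => Cdiv (Afun (hmul (hinv (gamma (t + h))) (gamma t))) (RtoC (h ^ 2))) _ (within (fun h => h <> 0) (locally 0))).
      * apply snd_lim.
      * apply (core a b); auto.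
    + apply prodA_nz; auto.
    + apply lim_Cmult.
      * apply (filterlim_comp _ _ _ (fun d : R * R => t + snd d) (fun r => Afun (hmul (hinv (gamma r)) (gamma s))) _ (locally t)).
        -- apply shift_lim, snd_lim.
        -- apply (cont_A a b); auto.
      * apply (filterlim_comp _ _ _ (fun d : R * R => s + fst d) (fun r => Afun (hmul (hinv (gamma r)) (gamma t))) _ (locally s)).
        -- apply shift_lim, fst_lim.
        -- apply (cont_A a b); auto.
Qed.
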